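(* Let $\Gamma$ be a simplicial complex whose $1$-skeleton (graph) contains, as an induced subgraph, one of the following graphs on four vertices: the disjoint union of two edges $2K_2$, the path $P_4$ with three edges, or the $4$-cycle $C_4$. Then for every simplicial complex $\Delta$ (on a vertex set disjoint from that of $\Gamma$), \[ \mathrm{ctd}(\Delta*\Gamma)\;\ge\;\mathrm{ctd}(\Delta)+1. \]
   Context: Simplicial complexes contain the empty face. Given convex polytopes $P_1,\dots,P_n\subset\mathbb{R}^d$ each containing the origin and a point $\mu\in\mathbb{R}^d$, write $P_\sigma=\sum_{i\in\sigma}P_i$ (Minkowski sum) for $\sigma\subseteq[n]$, with $P_\emptyset=\{0\}$; the Minkowski complex $\Delta(\mathcal{P};\mu)$ is the simplicial complex on vertex set $[n]$ whose faces are the $\sigma\subseteq[n]$ with $\mu\notin P_\sigma$. The convex threshold dimension $\mathrm{ctd}(\Delta)$ of a simplicial complex $\Delta$ on vertex set $[n]$ is the smallest $d$ such that $\Delta=\Delta(\mathcal{P};\mu)$ for some family $\mathcal{P}=(P_1,\dots,P_n)$ of convex bodies (equivalently, convex polytopes) in $\mathbb{R}^d$ containing the origin and some $\mu\in\mathbb{R}^d$; this is finite for every simplicial complex. The join of complexes $\Delta$ and $\Gamma$ on disjoint vertex sets is $\Delta*\Gamma=\{\sigma\uplus\tau:\sigma\in\Delta,\tau\in\Gamma\}$. *)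

(* Defs.v *)
From mathcomp Require Import all_boot all_order all_algebra.
From mathcomp Require Import boolp reals.
Set Implicit Arguments. Unset Strict Implicit. Unset Printing Implicit Defensive.
Import Order.TTheory GRing.Theory Num.Theory.
Local Open Scope ring_scope.

(* A simplicial complex on the (finite) vertex set V: a family of subsets of V
   containing the empty face and closed under taking subsets.
   (Vertices of V need not be faces: "ghost vertices" are allowed, as for
   Minkowski complexes on vertex set [n].) *)
Definition is_complex (V : finType) (D : {set {set V}}) : Prop :=
  set0 \in D /\ forall s t : {set V}, s \in D -> t \subset s -> t \in D.

Definition in_conv (R : realType) (d : nat) (S : seq 'rV[R]_d) (x : 'rV[R]_d) : Prop :=
  exists w : 'I_(size S) -> R,
    (forall i, 0 <= w i) /\ \sum_i w i = 1 /\ x = \sum_i w i *: S`_(nat_of_ord i).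

Definition in_mink (R : realType) (d : nat) (V : finType) (P : V -> seq 'rV[R]_d)
  (s : {set V}) (mu : 'rV[R]_d) : Prop :=
  exists x : V -> 'rV[R]_d,
    (forall i, i \in s -> in_conv (P i) (x i)) /\ mu = \sum_(i in s) x i.

Definition ctd_realizable (R : realType) (V : finType) (D : {set {set V}}) (d : nat) : Prop :=
  exists (P : V -> seq 'rV[R]_d) (mu : 'rV[R]_d),
    (forall i, in_conv (P i) 0) /\
    (forall s : {set V}, s \in D <-> ~ in_mink P s mu).

Lemma ctd_ex_asbool (R : realType) (V : finType) (D : {set {set V}}) :
  (exists d, ctd_realizable R D d) -> exists d, `[< ctd_realizable R D d >].
Proof. by case=> d H; exists d; apply/asboolP. Qed.

(* Convex threshold dimension: least d such that D is realizable in R^d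
   (the paper shows such d always exists; the fallback value 0 is never used
   for simplicial complexes). *)
Definition ctd (R : realType) (V : finType) (D : {set {set V}}) : nat :=
  match pselect (exists d, ctd_realizable R D d) with
  | left h => ex_minn (ctd_ex_asbool h)
  | right _ => 0%N
  end.

Definition cjoin (V1 V2 : finType) (D : {set {set V1}}) (G : {set {set V2}})
  : {set {set (V1 + V2)%type}} :=
  [set s : {set (V1 + V2)%type} | (inl @^-1: s \in D) && (inr @^-1: s \in G)].

Definition skel_adj (V : finType) (G : {set {set V}}) (u v : V) : bool :=
  (u != v) && ([set u; v] \in G).

Definition edge_2K2 (i j : 'I_4) : bool :=
  let a := minn i j in let b := maxn i j in
  ((a == 0) && (b == 1)) || ((a == 2) && (b == 3)).
Definition edge_P4 (i j : 'I_4) : bool :=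
  let a := minn i j in let b := maxn i j in
  ((a == 0) && (b == 1)) || ((a == 1) && (b == 2)) || ((a == 2) && (b == 3)).
Definition edge_C4 (i j : 'I_4) : bool :=
  let a := minn i j in let b := maxn i j in
  ((a == 0) && (b == 1)) || ((a == 1) && (b == 2)) || ((a == 2) && (b == 3))
  || ((a == 0) && (b == 3)).

Definition induced_in_skel (V : finType) (G : {set {set V}}) (H : 'I_4 -> 'I_4 -> bool)
  : Prop :=
  exists f : 'I_4 -> V, injective f /\
    forall i j : 'I_4, i != j -> (skel_adj G (f i) (f j) = H i j).

(* Main.v *)
Require Import Defs.
From mathcomp Require Import all_boot all_order all_algebra.
From mathcomp Require Import boolp reals.
From mathcomp Require Import ring lra.
Set Implicit Arguments. Unset Strict Implicit. Unset Printing Implicit Defensive.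
Import Order.TTheory GRing.Theory Num.Theory.
Local Open Scope ring_scope.

Lemma in_conv_mem (R : realType) d (S : seq 'rV[R]_d) x : x \in S -> in_conv S x.
Proof.
move=> xS; have xi : (index x S < size S)%N by rewrite index_mem.
pose j := Ordinal xi.
exists (fun i => (i == j)%:R); split; first by move=> i; rewrite ler0n.
split.
  by rewrite (bigD1 j) //= eqxx big1 ?addr0 // => i /negbTE ->.
rewrite (bigD1 j) //= eqxx scale1r big1 ?addr0 ?nth_index //.
by move=> i /negbTE ->; rewrite scale0r.
Qed.

Lemma in_conv_scale (R : realType) d (S : seq 'rV[R]_d) x l :
  in_conv S x -> in_conv S 0 -> 0 <= l -> l <= 1 -> in_conv S (l *: x).
Proof.
move=> [w [w0 [w1 ->]]] [v [v0 [v1 e0]]] l0 l1.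
exists (fun i => l * w i + (1 - l) * v i); split.
  by move=> i; rewrite addr_ge0 // mulr_ge0 ?w0 ?v0 // subr_ge0.
split.
  by rewrite big_split /= -!mulr_sumr w1 v1 !mulr1 addrC subrK.
rewrite [RHS](eq_bigr (fun i => l *: (w i *: S`_i) + (1 - l) *: (v i *: S`_i))); last first.
  by move=> i _; rewrite !scalerA -scalerDl.
by rewrite big_split /= -!scaler_sumr -e0 scaler0 addr0.
Qed.

Lemma conv_coord0 (R : realType) d (S : seq 'rV[R]_d) x k :
  in_conv S x -> (forall y, y \in S -> y 0 k = 0) -> x 0 k = 0.
Proof.
move=> [w [_ [_ ->]]] H; rewrite summxE big1 // => i _.
by rewrite mxE H ?mulr0 // mem_nth.
Qed.

Lemma in_convE (R : realType) d (S : seq 'rV[R]_d) x :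
  in_conv S x <-> exists w : nat -> R, (forall i, 0 <= w i) /\
    \sum_(i < size S) w i = 1 /\ x = \sum_(i < size S) w i *: S`_i.
Proof.
split.
  move=> [w [w0 [w1 ->]]].
  exists (fun n => oapp w 0 (insub n)); split.
    by move=> n; case: insub => //= ?; apply: w0.
  by split; [rewrite -w1|]; apply: eq_bigr => i _; rewrite valK.
move=> [w [w0 [w1 ->]]]; exists (fun i => w (val i)); by [].
Qed.

Lemma sum_disjU (R : realType) d (V : finType) (A B : {set V}) (F : V -> 'rV[R]_d) :
  (forall i, i \in A -> i \in B -> False) ->
  \sum_(i in A :|: B) F i = \sum_(i in A) F i + \sum_(i in B) F i.
Proof.
move=> dis; rewrite (bigID (mem A)) /=; congr (_ + _); apply: eq_bigl => i;
  rewrite !inE.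
  by case: (i \in A); rewrite /= ?andbT ?andbF.
case iA: (i \in A); rewrite /= ?andbF ?andbT //.
by case iB: (i \in B) => //; case: (dis i).
Qed.

Lemma in_mink_set0 (R : realType) d (V : finType) (P : V -> seq 'rV[R]_d) :
  in_mink P set0 0.
Proof. by exists (fun _ => 0); split; [move=> i; rewrite inE | rewrite big_set0]. Qed.

Lemma in_mink_set1 (R : realType) d (V : finType) (P : V -> seq 'rV[R]_d) i p :
  in_conv (P i) p -> in_mink P [set i] p.
Proof.
by move=> H; exists (fun _ => p); split; [move=> j /set1P -> | rewrite big_set1].
Qed.

Lemma in_mink_U (R : realType) d (V : finType) (P : V -> seq 'rV[R]_d) (A B : {set V}) p q :
  (forall i, i \in A -> i \in B -> False) ->
  in_mink P A p -> in_mink P B q -> in_mink P (A :|: B) (p + q).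
Proof.
move=> dis [x [xA ->]] [y [yB ->]].
exists (fun i => if i \in A then x i else y i); split.
  by move=> i; rewrite inE; case iA: (i \in A) => /= H; [apply: xA | apply: yB].
rewrite sum_disjU //; congr (_ + _); apply: eq_bigr => i Hi; first by rewrite Hi.
by case iA: (i \in A) => //; case: (dis i).
Qed.

Lemma in_mink_pair (R : realType) d (V : finType) (P : V -> seq 'rV[R]_d) u v p :
  u != v -> in_mink P ([set u] :|: [set v]) p ->
  exists a c, in_conv (P u) a /\ in_conv (P v) c /\ p = a + c.
Proof.
move=> uv [x [xA ->]]; exists (x u), (x v).
split; first by apply: xA; rewrite !inE eqxx.
split; first by apply: xA; rewrite !inE eqxx orbT.
rewrite sum_disjU ?big_set1 // => i /set1P -> /set1P e.
by rewrite e eqxx in uv.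
Qed.

Lemma in_mink_scale (R : realType) d (V : finType) (P : V -> seq 'rV[R]_d) (A : {set V}) p l :
  (forall i, in_conv (P i) 0) -> in_mink P A p -> 0 <= l -> l <= 1 ->
  in_mink P A (l *: p).
Proof.
move=> H0 [x [xA ->]] l0 l1; exists (fun i => l *: x i); split.
  by move=> i /xA Hi; apply: in_conv_scale.
by rewrite scaler_sumr.
Qed.

Lemma inr_notin_inl (V1 V2 : finType) (s : {set V1}) (x : V2) :
  (@inr V1 V2 x \in inl @: s) = false.
Proof. by apply/negbTE/imsetP => -[y _]. Qed.

Lemma inl_in_inl (V1 V2 : finType) (s : {set V1}) (x : V1) :
  (@inl V1 V2 x \in inl @: s) = (x \in s).
Proof. by rewrite mem_imset //; move=> ? ? []. Qed.

Lemma mink_inl (R : realType) d (V1 V2 : finType) (P : (V1 + V2)%type -> seq 'rV[R]_d) (s : {set V1}) p :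
  in_mink P (inl @: s) p <-> in_mink (fun i => P (inl i)) s p.
Proof.
have inj : {in s &, injective (@inl V1 V2)} by move=> ? ? _ _ [].
split.
  move=> [x [xA ->]]; exists (fun i => x (inl i)); split.
    by move=> i Hi; apply: xA; rewrite inl_in_inl.
  by rewrite big_imset.
move=> [x [xA ->]].
exists (fun j => match j with inl i => x i | inr _ => 0 end); split.
  by case=> i; rewrite ?inl_in_inl ?inr_notin_inl // => /xA.
by rewrite big_imset.
Qed.

Lemma conv_map (R : realType) d d' (f : 'rV[R]_d -> 'rV[R]_d') (S : seq 'rV[R]_d) x :
  (forall c y, f (c *: y) = c *: f y) -> (forall y z, f (y + z) = f y + f z) ->
  in_conv S x -> in_conv (map f S) (f x).
Proof.
move=> fZ fD; have f0 : f 0 = 0 by rewrite -(scale0r 0) fZ scale0r.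
have fS : forall (I : Type) (r : seq I) (F : I -> 'rV[R]_d),
    f (\sum_(i <- r) F i) = \sum_(i <- r) f (F i).
  by move=> I r F; apply: (big_morph f fD f0).
move=> /in_convE [w [w0 [w1 ->]]]; apply/in_convE; exists w; rewrite size_map.
split=> //; split=> //; rewrite fS; apply: eq_bigr => i _.
by rewrite fZ (set_nth_default (f 0)) ?size_map // (nth_map 0).
Qed.

Lemma conv_map_inv (R : realType) d d' (f : 'rV[R]_d -> 'rV[R]_d') (S : seq 'rV[R]_d) y :
  (forall c y, f (c *: y) = c *: f y) -> (forall y z, f (y + z) = f y + f z) ->
  in_conv (map f S) y -> exists x, in_conv S x /\ f x = y.
Proof.
move=> fZ fD; have f0 : f 0 = 0 by rewrite -(scale0r 0) fZ scale0r.
have fS : forall (I : Type) (r : seq I) (F : I -> 'rV[R]_d),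
    f (\sum_(i <- r) F i) = \sum_(i <- r) f (F i).
  by move=> I r F; apply: (big_morph f fD f0).
move=> /in_convE [w [w0 [w1 ->]]]; rewrite size_map in w1 *.
exists (\sum_(i < size S) w i *: S`_i); split.
  by apply/in_convE; exists w.
rewrite fS; apply: eq_bigr => i _.
by rewrite fZ (set_nth_default (f 0)) ?size_map // (nth_map 0).
Qed.

Lemma project (R : realType) (V : finType) (D : {set {set V}}) d
  (Q : V -> seq 'rV[R]_d.+1) mu w :
  w != 0 -> (forall i, in_conv (Q i) 0) ->
  (forall s, s \notin D -> in_mink Q s mu) ->
  (forall s, s \in D -> forall r, ~ in_mink Q s (mu + r *: w)) ->
  ctd_realizable R D d.
Proof.
move=> w0 H0 Hout Hin.
have [k wk] : exists k, w 0 k != 0.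
  case/boolP: [exists k, w 0 k != 0] => [/existsP //| /existsPn H].
  case/eqP: w0; apply/rowP => j; rewrite mxE.
  by move/negbNE/eqP: (H j).
pose pi (x : 'rV[R]_d.+1) : 'rV[R]_d := col' k (x - (x 0 k / w 0 k) *: w).
have piZ : forall c y, pi (c *: y) = c *: pi y.
  by move=> c y; apply/rowP => j; rewrite !mxE; ring.
have piD : forall y z, pi (y + z) = pi y + pi z.
  by move=> y z; apply/rowP => j; rewrite !mxE; ring.
have pi0 : pi 0 = 0 by rewrite -(scale0r 0) piZ scale0r.
have piS : forall (I : Type) (r : seq I) (P : pred I) (F : I -> 'rV[R]_d.+1),
    pi (\sum_(i <- r | P i) F i) = \sum_(i <- r | P i) pi (F i).
  by move=> I r P F; apply: (big_morph pi piD pi0).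
have piK : forall y, pi y = 0 -> y = (y 0 k / w 0 k) *: w.
  move=> y /rowP Hy; apply/rowP => j; rewrite mxE.
  case: (unliftP k j) => [j'|] ->.
    by move: (Hy j'); rewrite !mxE => /eqP; rewrite subr_eq0 => /eqP.
  by rewrite -mulrA mulVf ?mulr1.
exists (fun i => map pi (Q i)), (pi mu); split.
  by move=> i; rewrite -pi0; apply: conv_map.
move=> s; split.
  move=> sD [x' [x'A x'E]].
  have : forall i, exists x, i \in s -> in_conv (Q i) x /\ pi x = x' i.
    move=> i; case/boolP: (i \in s) => [/x'A /conv_map_inv [] // x Hx|_].
      by exists x.
    by exists 0.
  case/choice => f Hf.
  have HQ : in_mink Q s (\sum_(i in s) f i).
    by exists f; split => // i /Hf [].
  have : pi (\sum_(i in s) f i - mu) = 0.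
    rewrite piD -scaleN1r piZ piS x'E scaleN1r -(eq_bigr _ (fun i Hi => proj2 (Hf i Hi))).
    by rewrite subrr.
  move/piK => E; apply: (Hin s sD ((\sum_(i in s) f i - mu) 0 k / w 0 k)).
  by rewrite -E addrC subrK.
move=> Hn; case/boolP: (s \in D) => // sD; case: Hn.
case: (Hout s sD) => x [xA ->]; exists (fun i => pi (x i)); split.
  by move=> i /xA; apply: conv_map.
by rewrite piS.
Qed.

Lemma realizable_all (R : realType) (V : finType) (D : {set {set V}}) :
  is_complex D -> ctd_realizable R D #|{set V}|.
Proof.
move=> [D0 Dc].
pose n := #|{set V}|.
pose ind (B : {set 'I_n}) : 'rV[R]_n := \row_k (k \in B)%:R.
pose A (i : V) := [set k : 'I_n | (enum_val k \in D) && (i \notin enum_val k)].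
pose P (i : V) := [seq ind (B :&: A i) | B <- enum {set 'I_n}].
have indP : forall i (B : {set 'I_n}), B \subset A i -> in_conv (P i) (ind B).
  move=> i B /setIidPl HB; apply: in_conv_mem; rewrite -HB.
  by apply: map_f; rewrite mem_enum.
exists P, (ind [set k | enum_val k \in D]); split.
  move=> i; have -> : (0 : 'rV[R]_n) = ind set0.
    by apply/rowP => k; rewrite !mxE inE.
  by apply: indP; rewrite sub0set.
move=> s; split.
  move=> sD [x [xA xE]].
  have /rowP /(_ (enum_rank s)) := xE.
  rewrite summxE big1; first by rewrite !mxE inE enum_rankK sD; move/eqP; rewrite oner_eq0.
  move=> i Hi; apply: conv_coord0 (xA i Hi) _ => y /mapP [B _ ->].
  by rewrite mxE !inE enum_rankK Hi !andbF.
move=> Hn; case/boolP: (s \in D) => // sD; case: Hn.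
pose pk (k : 'I_n) := [pick i in s :\: enum_val k].
exists (fun i => ind [set k | (enum_val k \in D) && (pk k == Some i)]); split.
  move=> i Hi; apply: indP; apply/subsetP => k; rewrite !inE => /andP [-> /eqP].
  rewrite /pk; case: pickP => // j; rewrite !inE => /andP [Hj _] [<-].
  by [].
apply/rowP => k; rewrite summxE !mxE inE.
case ED: (enum_val k \in D); last first.
  by rewrite big1 // => i _; rewrite mxE inE ED.
have : pk k != None.
  rewrite /pk; case: pickP => // Hnone; case/negP: sD.
  apply: (Dc (enum_val k)) => //; apply/subsetP => y ys.
  by apply/negPn/negP => yk; move: (Hnone y); rewrite !inE yk ys.
case E: (pk k) => [i0|] // _.
have i0s : i0 \in s.
  by move: E; rewrite /pk; case: pickP => // j; rewrite !inE => /andP [_ ?] [<-].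
rewrite (bigD1 i0) //= mxE inE E ED eqxx big1 ?addr0 // => i /andP [_ ne].
by rewrite mxE inE E ED /=; case: eqP => // -[e]; rewrite e eqxx in ne.
Qed.

Lemma cjoin_complex (V1 V2 : finType) (D : {set {set V1}}) (G : {set {set V2}}) :
  is_complex D -> is_complex G -> is_complex (cjoin D G).
Proof.
move=> [D0 Dc] [G0 Gc]; split.
  rewrite inE; apply/andP; split.
    by have -> : inl @^-1: (set0 : {set (V1 + V2)%type}) = set0
      by apply/setP => x; rewrite !inE.
  by have -> : inr @^-1: (set0 : {set (V1 + V2)%type}) = set0
    by apply/setP => x; rewrite !inE.
move=> s t; rewrite !inE => /andP [H1 H2] ts; apply/andP; split.
  by apply: Dc H1 _; apply: preimsetS.
by apply: Gc H2 _; apply: preimsetS.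
Qed.

Lemma inl_inr_eq (V1 V2 : finType) (x : V1) (u : V2) :
  (@inl V1 V2 x == inr u) = false.
Proof. by apply/eqP. Qed.

Lemma inr_inr_eq (V1 V2 : finType) (x u : V2) :
  (@inr V1 V2 x == inr u) = (x == u).
Proof. by apply/eqP/eqP => [[]|->]. Qed.

Lemma pre_inl (V1 V2 : finType) (s : {set V1}) (u v : V2) :
  inl @^-1: (inl @: s :|: ([set inr u] :|: [set inr v])) = s.
Proof. by apply/setP => x; rewrite !inE inl_in_inl !inl_inr_eq /= orbF. Qed.

Lemma pre_inr (V1 V2 : finType) (s : {set V1}) (u v : V2) :
  inr @^-1: (inl @: s :|: ([set inr u] :|: [set inr v])) = [set u; v].
Proof. by apply/setP => x; rewrite !inE inr_notin_inl !inr_inr_eq. Qed.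

Lemma line_lemma (R : realType) (V1 V2 : finType) (D : {set {set V1}})
  (G : {set {set V2}}) (a b c e : V2) d (P : (V1 + V2)%type -> seq 'rV[R]_d) mu :
  is_complex D -> [set a; b] \in G -> [set c; e] \in G ->
  [set a; c] \notin G -> [set b; e] \notin G ->
  a != b -> c != e -> a != c -> b != e ->
  (forall i, in_conv (P i) 0) ->
  (forall s, s \in cjoin D G <-> ~ in_mink P s mu) ->
  exists w, w != 0 /\ forall s, s \in D -> forall r, ~ in_mink P (inl @: s) (mu + r *: w).
Proof.
move=> [D0 _] Gab Gce Gac Gbe ab ce ac be H0 HR.
pose pr (u v : V2) := [set @inr V1 V2 u] :|: [set inr v].
have nonface : forall u v, [set u; v] \notin G -> u != v ->
    exists p q, in_conv (P (inr u)) p /\ in_conv (P (inr v)) q /\ mu = p + q.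
  move=> u v nG uv; apply: in_mink_pair; first by rewrite inr_inr_eq.
  apply: contrapT => Hn; have := (proj2 (HR (pr u v)) Hn).
  rewrite inE => /andP [_].
  have -> : inr @^-1: pr u v = [set u; v].
    by apply/setP => x; rewrite !inE !inr_inr_eq.
  by rewrite (negbTE nG).
have avoid : forall s u v p q q', s \in D -> [set u; v] \in G -> u != v ->
    in_conv (P (inr u)) q -> in_conv (P (inr v)) q' -> p + (q + q') = mu ->
    ~ in_mink P (inl @: s) p.
  move=> s u v p q q' sD G1 uv Hq Hq' E Hp.
  apply: (proj1 (HR (inl @: s :|: pr u v))).
    by rewrite inE /pr pre_inl pre_inr sD G1.
  rewrite -E; apply: in_mink_U => //.
    move=> i /imsetP [y _ ->]; rewrite !inE !inl_inr_eq //.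
  apply: in_mink_U; try by apply: in_mink_set1.
  by move=> i /set1P -> /set1P [] /eqP; rewrite (negbTE uv).
have [al [ga [Hal [Hga Eac]]]] := nonface a c Gac ac.
have [be' [de [Hbe [Hde Ebe]]]] := nonface b e Gbe be.
exists (mu - al - be'); split.
  apply/negP; rewrite subr_eq0 subr_eq => /eqP E.
  apply: (avoid set0 a b 0 al be' D0 Gab ab Hal Hbe); first by rewrite E add0r addrC.
  rewrite imset0; exact: in_mink_set0.
move=> s sD r Hr.
have [r0|r0] := lerP 0 r.
  have pos : 0 < 1 + r by rewrite ltr_pwDl.
  pose l := (1 + r)^-1.
  have l0 : 0 <= l by rewrite invr_ge0 ltW.
  have l1 : l <= 1 by rewrite invf_le1 // lerDl.
  have s0 : 0 <= r * l by rewrite mulr_ge0.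
  have s1 : r * l <= 1 by rewrite ler_pdivrMr // mul1r lerDr.
  apply: (avoid s a b (l *: (mu + r *: (mu - al - be'))) ((r * l) *: al) ((r * l) *: be')
    sD Gab ab); first by apply: in_conv_scale.
  - by apply: in_conv_scale.
  - apply/rowP => k; rewrite !mxE /l; field.
    by rewrite gt_eqF.
  by apply: in_mink_scale.
have pos : 0 < 1 - r by rewrite subr_gt0 (lt_le_trans r0) ?ler01.
pose l := (1 - r)^-1.
have l0 : 0 <= l by rewrite invr_ge0 ltW.
have l1 : l <= 1 by rewrite invf_le1 // lerDl oppr_ge0 ltW.
have s0 : 0 <= - r * l by rewrite mulr_ge0 // oppr_ge0 ltW.
have s1 : - r * l <= 1 by rewrite ler_pdivrMr // mul1r lerDr.
apply: (avoid s c e (l *: (mu + r *: (mu - al - be'))) ((- r * l) *: ga) ((- r * l) *: de)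
  sD Gce ce); first by apply: in_conv_scale.
- by apply: in_conv_scale.
- have Ega : ga = mu - al by rewrite Eac addrC addKr.
  have Ede : de = mu - be' by rewrite Ebe addrC addKr.
  rewrite Ega Ede; apply/rowP => k; rewrite !mxE /l; field.
  by rewrite gt_eqF.
by apply: in_mink_scale.
Qed.

Definition o4 (i : nat) (h : (i < 4)%N) : 'I_4 := Ordinal h.

Lemma from_induced (V2 : finType) (G : {set {set V2}}) H :
  induced_in_skel G H -> H (@o4 0 isT) (@o4 1 isT) -> H (@o4 2 isT) (@o4 3 isT) ->
  ~~ H (@o4 0 isT) (@o4 2 isT) -> ~~ H (@o4 1 isT) (@o4 3 isT) ->
  exists a b c e, [/\ [set a; b] \in G, [set c; e] \in G, [set a; c] \notin G,
     [set b; e] \notin G & [/\ a != b, c != e, a != c & b != e]].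
Proof.
move=> [f [injf Hf]] h01 h23 h02 h13.
have ne : forall i j, i != j -> f i != f j by move=> i j; rewrite (inj_eq injf).
exists (f (@o4 0 isT)), (f (@o4 1 isT)), (f (@o4 2 isT)), (f (@o4 3 isT)).
have A01 := Hf _ _ (isT : @o4 0 isT != @o4 1 isT).
have A23 := Hf _ _ (isT : @o4 2 isT != @o4 3 isT).
have A02 := Hf _ _ (isT : @o4 0 isT != @o4 2 isT).
have A13 := Hf _ _ (isT : @o4 1 isT != @o4 3 isT).
rewrite /skel_adj in A01 A23 A02 A13.
rewrite h01 in A01; rewrite h23 in A23; rewrite (negbTE h02) in A02;
  rewrite (negbTE h13) in A13.
case/andP: A01 => n01 G01; case/andP: A23 => n23 G23.
rewrite ne // in A02; rewrite ne // in A13.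
split => //; rewrite /= in A02 A13; rewrite ?A02 ?A13 //; by split; rewrite // ne.
Qed.

Lemma main_gen (R : realType) (V1 V2 : finType)
  (D : {set {set V1}}) (G : {set {set V2}}) (a b c e : V2) :
  is_complex D -> is_complex G -> [set a; b] \in G -> [set c; e] \in G ->
  [set a; c] \notin G -> [set b; e] \notin G ->
  a != b -> c != e -> a != c -> b != e ->
  (ctd R D + 1 <= ctd R (cjoin D G))%N.
Proof.
move=> cD cG Gab Gce Gac Gbe ab ce ac be.
rewrite {2}/ctd; case: pselect => [hj|hn]; last first.
  by case: hn; exists #|{set (V1 + V2)%type}|; apply: realizable_all; apply: cjoin_complex.
case: ex_minnP => m /asboolP [P [mu [H0 HR]]] _.
have [w [w0 Hw]] := line_lemma cD Gab Gce Gac Gbe ab ce ac be H0 HR.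
case: m P mu H0 HR w w0 Hw => [|m] P mu H0 HR w w0 Hw.
  by move: w0; rewrite (thinmx0 w) eqxx.
have Hr : ctd_realizable R D m.
  apply: (@project R V1 D m (fun i => P (inl i)) mu w w0).
  - by move=> i; apply: H0.
  - move=> s sD; apply/mink_inl; apply: contrapT => Hn.
    move: (proj2 (HR _) Hn); rewrite inE => /andP [].
    have -> : (@inl V1 V2) @^-1: (inl @: s) = s.
      by apply/setP => x; rewrite !inE inl_in_inl.
    by rewrite (negbTE sD).
  - by move=> s sD r /mink_inl; apply: Hw.
rewrite /ctd; case: pselect => [h|hn]; last by case: hn; exists m.
by case: ex_minnP => k _ /(_ m (asboolT Hr)); rewrite addn1 ltnS.
Qed.

Theorem theorem3 (R : realType) (V1 V2 : finType)
  (D : {set {set V1}}) (G : {set {set V2}}) :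
  is_complex D -> is_complex G ->
  (induced_in_skel G edge_2K2 \/ induced_in_skel G edge_P4 \/ induced_in_skel G edge_C4) ->
  (ctd R D + 1 <= ctd R (cjoin D G))%N.
Proof.
move=> cD cG [H|[H|H]];
  have [a [b [c [e [Gab Gce Gac Gbe [ab ce ac be]]]]]] := from_induced H isT isT isT isT;
  exact: main_gen cD cG Gab Gce Gac Gbe ab ce ac be.
Qed.
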